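(* Let $\alpha\in(0,1)$ and $n\ge1$. For every configuration $w\in\mathcal{W}_{2n}$, $$(1+n)^\alpha\le\phi_\alpha(w)\le(2n)^{\alpha+1},$$ and the lower bound is attained if and only if $E(w)=0$.
   Context: A configuration of length $m$ is a word $w=w_1\cdots w_m$ over $\{1,2\}$ with $|w|_1=|w|_2$; $\mathcal{W}_m$ is the set of such words. $E(w)$ is the number of indices $i$ with $w_i=w_{i+1}$ (mismatches). Dyck factors: write $w=p\cdot v\cdot s$ with $v=v_1\cdots v_k$ a nonempty factor (occurring at a given position). $v$ is a positive Dyck factor of height $|p|_1-|p|_2$ if $|v|_1=|v|_2$, $|v_1\cdots v_i|_1\ge|v_1\cdots v_i|_2$ for all $1\le i\le k$, and $|p|_1-|p|_2\ge0$. A negative Dyck factor is defined by exchanging the letters $1$ and $2$ in these three conditions. A Dyck factor is maximal if no Dyck factor with the same height contains it. For $\alpha\in(0,1)$, $\phi_\alpha(w)=\sum_{v\in\mathrm{DF}(w)}(1+|v|_1)^\alpha$, where $\mathrm{DF}(w)$ is the set of (occurrences of) maximal Dyck factors of $w$. *)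

(* Defs.v *)
From HB Require Import structures.
From mathcomp Require Import all_boot all_order all_algebra.
From mathcomp Require Import all_classical all_reals all_analysis.
Set Implicit Arguments. Unset Strict Implicit. Unset Printing Implicit Defensive.
Import Order.TTheory GRing.Theory Num.Theory.

Definition is_word (w : seq nat) : bool := all (fun x => (x == 1) || (x == 2)) w.

Definition config (m : nat) (w : seq nat) : bool :=
  [&& size w == m, is_word w & count_mem 1 w == count_mem 2 w].

Definition mismatches (w : seq nat) : nat :=
  \sum_(i < (size w).-1) (nth 0 w i == nth 0 w i.+1).

(* The factor occurrence w_{i+1} ... w_j (positions i < j <= |w|), prefix p = w_1..w_i. *)
Definition factor (w : seq nat) (i j : nat) : seq nat := take (j - i) (drop i w).
Definition prefix (w : seq nat) (i : nat) : seq nat := take i w.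

Definition dyck_factor_ab (a b : nat) (w : seq nat) (i j : nat) : bool :=
  let v := factor w i j in
  let p := prefix w i in
  [&& i < j, j <= size w,
      count_mem a v == count_mem b v,
      all (fun k => count_mem b (take k v) <= count_mem a (take k v)) (iota 1 (j - i))
    & count_mem b p <= count_mem a p].

(* sgn = true: positive Dyck factor; sgn = false: negative Dyck factor. *)
Definition dyck_factor (w : seq nat) (i j : nat) (sgn : bool) : bool :=
  if sgn then dyck_factor_ab 1 2 w i j else dyck_factor_ab 2 1 w i j.

Definition dheight (w : seq nat) (i : nat) (sgn : bool) : int :=
  let p := prefix w i in
  if sgn then (Posz (count_mem 1 p) - Posz (count_mem 2 p))%R
  else (Posz (count_mem 2 p) - Posz (count_mem 1 p))%R.

Definition max_dyck_factor (w : seq nat) (i j : nat) (sgn : bool) : bool :=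
  dyck_factor w i j sgn &&
  ~~ [exists i' : 'I_(size w).+1, exists j' : 'I_(size w).+1, exists s' : bool,
        [&& dyck_factor w i' j' s', dheight w i' s' == dheight w i sgn,
            i' <= i, j <= j' & (i' != i :> nat) || (j' != j :> nat) || (s' != sgn)]].

Local Open Scope ring_scope.

Definition phi (R : realType) (alpha : R) (w : seq nat) : R :=
  \sum_(i < (size w).+1) \sum_(j < (size w).+1) \sum_(s : bool | max_dyck_factor w i j s)
     ((1 + (count_mem 1 (factor w i j))%:R) `^ alpha).

(* Main.v *)
Require Import Defs.
From HB Require Import structures.
From mathcomp Require Import all_boot all_order all_algebra.
From mathcomp Require Import all_classical all_reals all_analysis.
From mathcomp Require Import zify ring lra.
Import Order.TTheory GRing.Theory Num.Theory.
Set Implicit Arguments. Unset Strict Implicit.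
Section Walk.
Variable w : seq nat.
Hypothesis hw : is_word w.

Lemma lev0 s : dheight w 0 s = 0%R.
Proof. by case: s; rewrite /dheight /Defs.prefix take0 /= subrr. Qed.

Lemma levN s t : dheight w t (~~ s) = (- dheight w t s)%R.
Proof. by case: s; rewrite /dheight /= opprB. Qed.

Lemma lev_step s t : (t < size w)%N ->
  dheight w t.+1 s = (dheight w t s + (if (nth 0 w t == 1) == s then 1 else -1))%R.
Proof.
move=> ht; rewrite /dheight /Defs.prefix (take_nth 0 ht) -!cats1 !count_cat /=.
have : nth 0 w t \in w by rewrite mem_nth.
move: hw => /allP H /H /orP[] /eqP ->; case: s => /=; lia.
Qed.
End Walk.

Section Walk2.
Variable w : seq nat.

Definition levab (a b : nat) (t : nat) : int :=
  ((count_mem a (take t w))%:Z - (count_mem b (take t w))%:Z)%R.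

Lemma cnt_take x i k j : (k <= j - i)%N ->
  count_mem x (take (i + k) w) =
  (count_mem x (take i w) + count_mem x (take k (Defs.factor w i j)))%N.
Proof. by move=> hk; rewrite takeD count_cat /Defs.factor take_takel. Qed.

Lemma dfab_iff a b i j : dyck_factor_ab a b w i j <->
  [/\ (i < j)%N, (j <= size w)%N, levab a b j = levab a b i, (0 <= levab a b i)%R
   & forall t, (i <= t <= j)%N -> (levab a b i <= levab a b t)%R].
Proof.
rewrite /dyck_factor_ab /levab /Defs.prefix.
have hj : forall x, (i <= j)%N -> count_mem x (take j w) =
   (count_mem x (take i w) + count_mem x (Defs.factor w i j))%N.
  move=> x hij; rewrite -(subnKC hij) (@cnt_take x i (j - i) j) //.
  by rewrite /Defs.factor take_takel // addKn.
split.
- case/and5P => hij hjs /eqP heq /allP hall hp.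
  have hij' : (i <= j)%N by lia.
  split => //.
  + rewrite !hj //; lia.
  + lia.
  + move=> t /andP[h1 h2].
    have ht : t = (i + (t - i))%N by lia.
    have hk : (t - i <= j - i)%N by lia.
    rewrite ht !(@cnt_take _ i (t - i) j hk).
    have [->|hk0] := eqVneq (t - i)%N 0%N; first by rewrite take0 /=; lia.
    have := hall (t - i)%N; rewrite mem_iota => /(_ ltac:(lia)); lia.
- case=> hij hjs heq hp hall.
  have hij' : (i <= j)%N by lia.
  apply/and5P; split => //.
  + apply/eqP; move: heq; rewrite !hj //; lia.
  + apply/allP => k; rewrite mem_iota => /andP[k1 k2].
    have := hall (i + k)%N ltac:(lia).
    have hk : (k <= j - i)%N by lia.
    rewrite !(@cnt_take _ i k j hk). lia.
  + lia.
Qed.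

Lemma df_iff i j s : dyck_factor w i j s <->
  [/\ (i < j)%N, (j <= size w)%N, dheight w j s = dheight w i s, (0 <= dheight w i s)%R
   & forall t, (i <= t <= j)%N -> (dheight w i s <= dheight w t s)%R].
Proof. by case: s; rewrite /dyck_factor /dheight /Defs.prefix; apply: dfab_iff. Qed.
End Walk2.

Section Walk3.
Variable w : seq nat.
Hypothesis hw : is_word w.
Hypothesis hS : forall s, dheight w (size w) s = 0%R.

Lemma step_bound s t : (t < size w)%N ->
  (dheight w t s - 1 <= dheight w t.+1 s <= dheight w t s + 1)%R.
Proof. move=> ht; rewrite (lev_step hw s ht); case: ifP => _; lia. Qed.

Lemma df_first i j s : dyck_factor w i j s -> (nth 0 w i == 1) == s.
Proof.
case/df_iff => hij hjs _ _ hall.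
have := hall i.+1 ltac:(lia); rewrite (lev_step hw s) //; last by lia.
case: ifP => //; lia.
Qed.

Lemma df_first' i j s : dyck_factor w i j s ->
  dheight w i.+1 s = (dheight w i s + 1)%R.
Proof.
move=> h; have := df_first h; move/df_iff: h => [hij hjs _ _ _].
by rewrite (lev_step hw s) //; [move=> -> | lia].
Qed.

Lemma contain_sign i j s i' j' s' : dyck_factor w i j s -> dyck_factor w i' j' s' ->
  (i' <= i)%N -> (j <= j')%N -> s' = s.
Proof.
move=> h h' hi hj; have e := df_first' h.
move/df_iff: h => [hij hjs _ hp _]; move/df_iff: h' => [_ _ _ hp' hall'].
have [//|hne] := eqVneq s' s.
have hs' : s' = ~~ s by move: hne; clear; case: s; case: s'.
have := hall' i.+1 ltac:(lia); rewrite hs' !levN e; move: hp'; rewrite hs' levN; lia.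
Qed.

Lemma forward s k : (k < size w)%N -> (0 <= dheight w k s)%R ->
  dheight w k.+1 s = (dheight w k s + 1)%R ->
  exists j, dyck_factor w k j s.
Proof.
move=> hk hh e1; set h := dheight w k s in hh e1 *.
have exP : exists t, (k < t)%N && (dheight w t s <= h)%R.
  by exists (size w); rewrite hk hS.
case: (ex_minnP exP) => j /andP[hkj hjh] hmin.
have hjs : (j <= size w)%N by apply: hmin; rewrite hk hS.
have hj2 : (k.+1 < j)%N.
  case: (ltngtP k.+1 j) => // hj; [lia | by move: hjh; rewrite -hj e1; lia].
have hprev : (h < dheight w j.-1 s)%R.
  rewrite ltNge; apply/negP => hle; have := hmin j.-1; rewrite hle andbT; lia.
have := step_bound s (ltac:(lia) : (j.-1 < size w)%N).
have -> : j.-1.+1 = j by lia.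
move=> hb.
exists j; apply/df_iff; split => //.
- rewrite -/h; lia.
- move=> t /andP[h1 h2]; rewrite -/h.
  have [->|htk] := eqVneq t k; first by [].
  have [->|htj] := eqVneq t j; first by lia.
  rewrite leNgt; apply/negP => hlt; have := hmin t; rewrite (ltW hlt) andbT; lia.
Qed.

Lemma backward s k : (k < size w)%N -> (0 <= dheight w k.+1 s)%R ->
  dheight w k s = (dheight w k.+1 s + 1)%R ->
  exists i, (i <= k)%N /\ dyck_factor w i k.+1 s.
Proof.
move=> hk hh e1; set h := dheight w k.+1 s in hh e1 *.
have exP : exists t, (t <= k)%N && (dheight w t s <= h)%R.
  by exists 0%N; rewrite lev0.
have ub : forall t, (t <= k)%N && (dheight w t s <= h)%R -> (t <= k)%N.
  by move=> t /andP[].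
case: (ex_maxnP exP ub) => i /andP[hik hih] hmax.
have hi2 : (i < k)%N.
  case: (ltngtP i k) => // hi; [lia | by move: hih; rewrite hi e1; lia].
have hnext : (h < dheight w i.+1 s)%R.
  rewrite ltNge; apply/negP => hle; have := hmax i.+1; rewrite hle andbT; lia.
have hb := step_bound s (ltac:(lia) : (i < size w)%N).
exists i; split; first lia.
apply/df_iff; split.
- lia.
- exact: hk.
- rewrite -/h; lia.
- lia.
- move=> t /andP[h1 h2].
  have [->|hti] := eqVneq t i; first by [].
  have [->|htk] := eqVneq t k.+1; first by rewrite -/h; lia.
  rewrite leNgt; apply/negP => hlt.
  have := hmax t; rewrite (ltW (lt_le_trans hlt _)) ?andbT; lia.
Qed.
End Walk3.

Section Walk4.
Variable w : seq nat.
Hypothesis hw : is_word w.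
Hypothesis hS : forall s, dheight w (size w) s = 0%R.

Lemma max_ext i j s : dyck_factor w i j s -> exists i' j',
  [/\ (i' <= i)%N, (j <= j')%N, dheight w i' s = dheight w i s & max_dyck_factor w i' j' s].
Proof.
move: {2}(i + (size w - j))%N (leqnn (i + (size w - j))%N) => m.
elim: m i j => [|m IH] i j hm h.
- exists i, j; split => //.
  case hmax: (max_dyck_factor w i j s) => //.
  move: hmax; rewrite /max_dyck_factor h /= => /negbFE /existsP [i2 /existsP [j2 /existsP [s2 /and5P [h2 /eqP hd hi hj hne]]]].
  have e := contain_sign hw h h2 hi hj; subst s2.
  move/df_iff: h2 => [_ hj2 _ _ _].
  move: hne; rewrite eqxx orbF; case/orP => /eqP ?; lia.
- case hmax: (max_dyck_factor w i j s); first by exists i, j; split.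
  move: hmax; rewrite /max_dyck_factor h /= => /negbFE /existsP [i2 /existsP [j2 /existsP [s2 /and5P [h2 /eqP hd hi hj hne]]]].
  have e := contain_sign hw h h2 hi hj; subst s2.
  have h2' := h2; move/df_iff: h2' => [_ hj2 _ _ _].
  have hm2 : (i2 + (size w - j2) <= m)%N.
    move: hne; rewrite eqxx orbF; case/orP => /eqP ?; lia.
  have [i3 [j3 [hi3 hj3 hd3 hmx]]] := IH _ _ hm2 h2.
  exists i3, j3; split => //; [lia | lia | by rewrite hd3].
Qed.

Definition key (k : nat) : bool * int :=
  let s := (nth 0 w k == 1) in
  if (0 <= dheight w k s)%R then (s, dheight w k s) else (~~ s, dheight w k.+1 (~~ s)).

Lemma cover k : (k < size w)%N -> exists i j s,
  [/\ dyck_factor w i j s, (i <= k < j)%N & (s, dheight w i s) = key k].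
Proof.
move=> hk; rewrite /key; set s := (nth 0 w k == 1).
have e := lev_step hw s hk; rewrite eqxx in e.
case: ifP => hp.
- have [j hj] := forward hw hS hk hp e.
  exists k, j, s; split => //; move/df_iff: hj => [? _ _ _ _]; lia.
- have hp' : (0 <= dheight w k.+1 (~~ s))%R by rewrite levN e; move: hp; lia.
  have e' : dheight w k (~~ s) = (dheight w k.+1 (~~ s) + 1)%R by rewrite !levN e; lia.
  have [i [hik hi]] := backward hw hk hp' e'.
  exists i, k.+1, (~~ s); split => //; first lia.
  by move/df_iff: hi => [_ _ -> _ _].
Qed.

Lemma max_cover k : (k < size w)%N -> exists i j s,
  [/\ max_dyck_factor w i j s, (i <= k < j)%N & (s, dheight w i s) = key k].
Proof.
move=> hk; have [i [j [s [h hij hkey]]]] := cover hk.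
have [i' [j' [hi hj hd hm]]] := max_ext h.
exists i', j', s; split => //; first lia.
by rewrite hd.
Qed.

Lemma key_neq k : (k.+1 < size w)%N -> nth 0 w k = nth 0 w k.+1 -> key k <> key k.+1.
Proof.
move=> hk hn; rewrite /key -hn; set s := (nth 0 w k == 1).
have e := lev_step hw s (ltnW hk); rewrite eqxx in e.
have e2 := lev_step hw s hk; rewrite -hn eqxx in e2.
rewrite !levN e e2.
clearbody s; move: e e2; case: s => /= e e2; case: ifP => h1; case: ifP => h2 [] //; lia.
Qed.
End Walk4.

Lemma count_factor (w : seq nat) (p : pred nat) i j : (j <= size w)%N ->
  count p (Defs.factor w i j) =
  (\sum_(k < size w) ((p (nth 0 w k)) && (i <= k) && (k < j)))%N.
Proof.
move=> hj.
have [hij|hij] := leqP i j; last first.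
  rewrite /Defs.factor (_ : (j - i = 0)%N); last by lia.
  rewrite take0 /= big1 // => k _; case: (p _) => //=; lia.
rewrite /Defs.factor -(map_nth_iota 0); last by lia.
rewrite count_map -sum1_count.
rewrite (_ : iota i (j - i) = index_iota i j) //.
rewrite (big_nat_widenl i 0) // (big_nat_widen _ _ _ _ _ hj) big_mkord.
by rewrite big_mkcond /=; apply: eq_bigr => k _; case: (p _).
Qed.

Lemma mism0 w : mismatches w = 0%N ->
  forall k, (k.+1 < size w)%N -> nth 0 w k != nth 0 w k.+1.
Proof.
move=> h k hk; apply/negP => /eqP he.
have hk' : (k < (size w).-1)%N by lia.
move: h; rewrite /mismatches (bigD1 (Ordinal hk')) //= he eqxx; lia.
Qed.

Lemma mism_pos w : mismatches w <> 0%N ->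
  exists k, (k.+1 < size w)%N /\ nth 0 w k = nth 0 w k.+1.
Proof.
move=> h; apply/not_existsP => hn; apply: h; rewrite /mismatches big1 // => k _.
case: eqP => // he; exfalso; apply: (hn k); split => //.
by have := ltn_ord k; lia.
Qed.

Section Alt.
Variable w : seq nat.
Hypothesis hw : is_word w.
Hypothesis hS : forall s, dheight w (size w) s = 0%R.
Hypothesis halt : forall k, (k.+1 < size w)%N -> nth 0 w k != nth 0 w k.+1.
Let s0 := (nth 0 w 0 == 1).

Lemma in12 t : (t < size w)%N -> (nth 0 w t == 1) || (nth 0 w t == 2).
Proof. by move=> ht; move/allP: hw; apply; rewrite mem_nth. Qed.

Lemma alt_letter t : (t < size w)%N -> (nth 0 w t == 1) = (if odd t then ~~ s0 else s0).
Proof.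
elim: t => [//|t IH] ht.
have hn := halt ht; have IH' := IH ltac:(lia).
move: IH' hn; rewrite /=.
have := in12 ht; have := in12 (ltac:(lia) : (t < size w)%N).
case/orP => /eqP ->; case/orP => /eqP ->; case: (odd t); case: s0 => //.
Qed.

Lemma alt_lev t : (t <= size w)%N -> dheight w t s0 = Posz (odd t).
Proof.
elim: t => [|t IH] ht; first by rewrite lev0.
rewrite (lev_step hw s0 ht) IH; last by lia.
rewrite alt_letter //=.
by case: (odd t); case: s0.
Qed.

Lemma alt_df i j s : dyck_factor w i j s -> s = s0 /\ dheight w i s = 0%R.
Proof.
move=> h; have e := df_first' hw h.
move/df_iff: h => [hij hjs _ hp _].
move: e hp; have [->|hne] := eqVneq s s0.
  by rewrite !alt_lev; try lia; case: (odd i).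
have hs : s = ~~ s0 by move: hne; clear; case: s; case: s0.
by rewrite hs !levN !alt_lev; try lia; case: (odd i).
Qed.

Lemma alt_full : (0 < size w)%N -> dyck_factor w 0 (size w) s0.
Proof.
move=> h; apply/df_iff; split => //.
- by rewrite hS lev0.
- by rewrite lev0.
- by move=> t /andP[_ ht]; rewrite lev0 alt_lev //; case: (odd t).
Qed.

Lemma alt_max i j s : max_dyck_factor w i j s -> [/\ i = 0%N, j = size w & s = s0].
Proof.
case/andP => h /existsPn hn.
have [hs hd] := alt_df h; subst s.
move/df_iff: (h) => [hij hjs _ _ _].
have := hn ord0; move/existsPn => /(_ ord_max) /existsPn /(_ s0).
rewrite alt_full; last by lia.
rewrite /= lev0 hd eqxx /= hjs eqxx orbF /=.
by case: eqP => // <-; case: eqP => // <-.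
Qed.
End Alt.

Lemma cnt_sub (w : seq nat) p i j : (count p (Defs.factor w i j) <= count p w)%N.
Proof.
rewrite /Defs.factor; apply: (@leq_trans (count p (drop i w))).
  by rewrite -{2}(cat_take_drop (j - i) (drop i w)) count_cat leq_addr.
by rewrite -{2}(cat_take_drop i w) count_cat leq_addl.
Qed.

Lemma max_uniq w i j s i' j' s' : max_dyck_factor w i j s -> dyck_factor w i' j' s' ->
  (i' <= i)%N -> (j <= j')%N -> dheight w i' s' = dheight w i s ->
  (i' <= size w)%N -> (j' <= size w)%N -> [/\ i' = i, j' = j & s' = s].
Proof.
move=> /andP[_ /existsPn H] h hi hj hd hi' hj'.
move: (H (inord i')) => /existsPn /(_ (inord j')) /existsPn /(_ s').
rewrite !inordK // h hd eqxx hi hj /=.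
by case: eqP => // ->; case: eqP => // ->; case: eqP => // ->.
Qed.

Lemma word_count w : is_word w -> (count_mem 1 w + count_mem 2 w = size w)%N.
Proof.
elim: w => //= x s IH /andP[hx hs]; rewrite -IH //.
by case/orP: hx => /eqP -> /=; lia.
Qed.


Local Open Scope ring_scope.

Lemma pow_lb (R : realType) (a x M : R) : 0 < a < 1 -> 0 < x <= M ->
  x * M `^ (a - 1) <= x `^ a.
Proof.
move=> /andP[a0 a1] /andP[x0 xM].
rewrite -(mulr_powRB1 (ltW x0) a0) ler_wpM2l ?(ltW x0) //.
have -> : a - 1 = - (1 - a) by ring.
rewrite !powRN lef_pV2 ?posrE ?powR_gt0 //; last by lra.
apply: ge0_ler_powR; rewrite ?nnegrE; lra.
Qed.

Lemma sum_lb (R : realType) (T : finType) (A : {set T}) (c : T -> nat) (a : R) :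
  0 < a < 1 ->
  (1 + (\sum_(x in A) c x)%N%:R) `^ (a - 1) * (#|A|%:R + (\sum_(x in A) c x)%N%:R)
    <= \sum_(x in A) (1 + (c x)%:R) `^ a.
Proof.
move=> ha; set N := (\sum_(x in A) c x)%N.
have -> : (#|A|%:R + N%:R : R) = \sum_(x in A) (1 + (c x)%:R).
  by rewrite big_split /= sumr_const /N natr_sum.
rewrite mulr_sumr; apply: ler_sum => x xA.
rewrite mulrC; apply: pow_lb => //.
apply/andP; split; first by rewrite ltr_pwDl // ler0n.
rewrite lerD2l ler_nat /N (bigD1 x) //=; lia.
Qed.

Lemma lower (R : realType) (T : finType) (A : {set T}) (c : T -> nat) (a : R) (m : nat) :
  0 < a < 1 -> (m <= \sum_(x in A) c x)%N -> (0 < #|A|)%N ->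
  (1 + m%:R) `^ a <= \sum_(x in A) (1 + (c x)%:R) `^ a /\
  ((1 < #|A|)%N -> (1 + m%:R) `^ a < \sum_(x in A) (1 + (c x)%:R) `^ a).
Proof.
move=> ha hm hA; have hlb := sum_lb A c ha.
set N := (\sum_(x in A) c x)%N in hlb hm.
have hM : 0 < 1 + N%:R :> R by rewrite ltr_pwDl // ler0n.
have hle : (1 + m%:R) `^ a <= (1 + N%:R) `^ a :> R.
  apply: ge0_ler_powR; rewrite ?nnegrE; try lra.
  - by rewrite addr_ge0 // ler0n.
  - by rewrite lerD2l ler_nat.
have hp : 0 < (1 + N%:R) `^ (a - 1) :> R by apply: powR_gt0.
have e : (1 + N%:R) `^ (a - 1) * (1 + N%:R) = (1 + N%:R) `^ a :> R.
  by rewrite mulrC mulr_powRB1 ?(ltW hM) //; lra.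
split.
- apply: (le_trans hle); apply: le_trans hlb; rewrite -e ler_wpM2l ?(ltW hp) //.
  by rewrite lerD2r ler1n.
- move=> h2; apply: (le_lt_trans hle); apply: lt_le_trans hlb; rewrite -e ltr_pM2l //.
  by rewrite ltrD2r ltr1n.
Qed.

Lemma upper (R : realType) (T : finType) (A : {set T}) (c : T -> nat) (a : R) (K : nat) :
  0 < a -> (forall x, x \in A -> (1 + c x <= K)%N) ->
  \sum_(x in A) (1 + (c x)%:R) `^ a <= #|A|%:R * K%:R `^ a.
Proof.
move=> ha hc; rewrite (_ : #|A|%:R * _ = \sum_(x in A) K%:R `^ a); last by rewrite sumr_const mulr_natl.
apply: ler_sum => x xA.
apply: ge0_ler_powR; rewrite ?nnegrE ?(ltW ha) //.
all: try by rewrite addr_ge0 // ler0n.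
all: try by rewrite ler0n.
by have := hc x xA; rewrite -(ler_nat R) natrD mulr1n.
Qed.

Unset Implicit Arguments.

Theorem lemma2 (R : realType) (alpha : R) (n : nat) (w : seq nat) :
  0 < alpha < 1 -> (1 <= n)%N -> config (2 * n) w ->
  [/\ (1 + n%:R) `^ alpha <= phi alpha w,
      phi alpha w <= (2 * n)%:R `^ (alpha + 1)
    & phi alpha w = (1 + n%:R) `^ alpha <-> mismatches w = 0%N].
Proof.
move=> ha hn /and3P [/eqP hsz hw /eqP hc].
have hsz' : size w = (2 * n)%N by rewrite hsz.
have hS : forall s, dheight w (size w) s = 0%R.
  by case; rewrite /dheight /Defs.prefix take_size hc subrr.
have hcnt : count_mem 1 w = n.
  have := word_count hw; rewrite hsz' hc; lia.
set S := size w.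
pose T := ('I_S.+1 * ('I_S.+1 * bool))%type.
pose A := [set x : T | max_dyck_factor w x.1 x.2.1 x.2.2].
pose c := fun x : T => count_mem 1 (Defs.factor w x.1 x.2.1).
have hphi : phi alpha w = \sum_(x in A) (1 + (c x)%:R) `^ alpha.
  rewrite /phi; under eq_bigr => i _ do rewrite pair_big_dep /=.
  rewrite pair_big_dep /=; apply: eq_bigl => x; by rewrite inE.
have hcA : forall x, x \in A -> (c x <= n)%N.
  by move=> x _; rewrite -hcnt cnt_sub.
have hAdf : forall x, x \in A -> dyck_factor w x.1 x.2.1 x.2.2.
  by move=> x; rewrite inE => /andP[].
have hcard : (#|A| <= S)%N.
  have inj : {in A &, injective (fun x : T => x.1)}.
    move=> [i [j s]] [i' [j' s']] hx hy /= ei; subst i'.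
    have dx := hAdf _ hx; have dy := hAdf _ hy.
    move: hx hy dx dy; rewrite !inE /= => hx hy dx dy.
    have es : s' = s.
      have := df_first hw dx; have := df_first hw dy.
      move: (nth 0 w i == 1) => b; clear.
      by case: s; case: s'; case: b.
    subst s'.
    have hj := ltn_ord j; have hj' := ltn_ord j'; have hi := ltn_ord i.
    case: (leqP j j') => hjj.
    + have [_ e _] := max_uniq hx dy (leqnn _) hjj erefl ltac:(lia) ltac:(lia).
      by rewrite (val_inj e).
    + have [_ e _] := max_uniq hy dx (leqnn _) (ltnW hjj) erefl ltac:(lia) ltac:(lia).
      by rewrite (val_inj e).
  have sub : [set x.1 | x in A] \subset [set~ (ord_max : 'I_S.+1)].
    apply/fintype.subsetP => _ /imsetP [x xA ->]; rewrite !inE.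
    move/df_iff: (hAdf _ xA) => [h1 h2 _ _ _].
    by apply/eqP => e; move: h1 h2; rewrite e /=; lia.
  rewrite -(card_in_imset inj); apply: leq_trans (subset_leq_card sub) _.
  by rewrite cardsC1 card_ord.
have hSpos : (0 < S)%N by rewrite /S hsz'; lia.
have mkA : forall i j s, max_dyck_factor w i j s ->
    ((inord i, (inord j, s)) : T) \in A /\ (j <= S)%N.
  move=> i j s hm; have := hm; case/andP => /df_iff [h1 h2 _ _ _] _.
  by split => //; rewrite inE /= !inordK //; lia.
have hN : (n <= \sum_(x in A) c x)%N.
  have e1 : forall x, x \in A -> c x =
      (\sum_(k < S) ((nth 0 w k == 1) && (x.1 <= k) && (k < x.2.1)))%N.
    by move=> x _; rewrite /c count_factor // -ltnS ltn_ord.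
  rewrite (eq_bigr _ e1) exchange_big /=.
  have e0 : n = (\sum_(k < S) ((nth 0 w k == 1) && (0 <= k) && (k < S)))%N.
    have := @count_factor w (pred1 1%N) 0 (size w) (leqnn _).
    by rewrite /Defs.factor drop0 subn0 take_size hcnt.
  rewrite {1}e0; apply: leq_sum => k _.
  case h1: (nth 0 w k == 1); last by [].
  have [i [j [s [hm hk _]]]] := max_cover hw hS (ltn_ord k).
  have [xA hj] := mkA _ _ _ hm.
  rewrite (bigD1 _ xA) /= !inordK; try lia.
have hA0 : (0 < #|A|)%N.
  have [i [j [s [hm _ _]]]] := max_cover hw hS hSpos.
  by apply/card_gt0P; exists ((inord i, (inord j, s)) : T); case: (mkA _ _ _ hm).
have ha' := ha; move/andP: ha' => [ha0 ha1].
have [lb lbs] := lower ha hN hA0.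
split.
- by rewrite hphi.
- rewrite hphi; apply: le_trans (@upper _ _ A c alpha (2 * n)%N ha0 _) _.
    by move=> x xA; have := hcA x xA; lia.
  have hK : (0 < (2 * n)%N%:R :> R) by rewrite ltr0n; lia.
  rewrite (powRD (x := (2 * n)%N%:R)); last by rewrite (gt_eqF hK) implybT.
  rewrite powRr1 ?(ltW hK) // mulrC ler_wpM2l ?powR_ge0 // ler_nat.
  by rewrite -hsz'.
- split.
  + move=> he; case: (eqVneq (mismatches w) 0%N) => // /eqP hm.
    have [k [hk hnk]] := mism_pos hm.
    have [i [j [s [hm1 hk1 hkey1]]]] := max_cover hw hS (ltnW hk).
    have [i' [j' [s' [hm2 hk2 hkey2]]]] := max_cover hw hS hk.
    have h2 : (1 < #|A|)%N.
      apply/card_gt1P; exists ((inord i, (inord j, s)) : T), ((inord i', (inord j', s')) : T).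
      case: (mkA _ _ _ hm1) => xA _; case: (mkA _ _ _ hm2) => yA _.
      split => //; apply/eqP => exy.
      have ei : i = i'.
        have := congr1 (fun x : T => val x.1) exy; rewrite /= !inordK //; lia.
      have es : s = s' by have := congr1 (fun x : T => x.2.2) exy.
      apply: (key_neq hw hk hnk); rewrite -hkey1 -hkey2 ei es //.
    by have := lbs h2; rewrite -hphi he ltxx.
  + move=> hm; have halt := mism0 hm.
    have hA1 : (#|A| <= 1)%N.
      have sub : A \subset [set ((ord0, (ord_max, (nth 0 w 0 == 1%N))) : T)].
        apply/fintype.subsetP => x xA; rewrite inE.
        have := xA; rewrite inE => hmx.
        have [e1 e2 e3] := alt_max hw hS halt hmx.
        move: e1 e2 e3; case: x {xA hmx} => [i [j s]] /= e1 e2 e3.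
        by apply/eqP; congr (_, (_, _)); [apply: val_inj | apply: val_inj |].
      by rewrite (leq_trans (subset_leq_card sub)) ?cards1.
    apply: le_anti; rewrite hphi lb andbT.
    apply: le_trans (@upper _ _ A c alpha (1 + n)%N ha0 _) _.
      by move=> x xA; have := hcA x xA; lia.
    rewrite natrD mulr1n -[X in _ <= X]mul1r ler_wpM2r ?powR_ge0 //.
    by rewrite -[1]/(1%:R) ler_nat.
Qed.
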